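(* Assume the subgraph $\mathcal G_{\sigma(t)}$ is undirected for all $t\ge0$, and that there exist $T_{\mathrm c}>0$ and a subsequence $\{t_{j_k}:k=0,1,2,\dots\}$ of the switching instants with $t_{j_0}=0$ and $t_{j_{k+1}}-t_{j_k}\le T_{\mathrm c}$, such that for every $k$ every node $i\in\{1,\dots,N\}$ is reachable from node $0$ in the union graph $\bigcup_{t_j\in[t_{j_k},t_{j_{k+1}})}\bar{\mathcal G}_{\sigma(t_j)}$. Then there exists $0<\delta<1$ such that $$\left\|\prod_{r=j_k}^{j_{k+1}-1}P_{\sigma(t_r)}\right\|\le\delta\quad\text{for all }k=0,1,2,\dots.$$
   Context: $\sigma:[0,\infty)\to\mathcal P=\{1,\dots,n_0\}$ is a piecewise constant switching signal: there are switching instants $0=t_0<t_1<\cdots$ and a dwell time $\tau>0$ with $t_{j+1}-t_j\ge\tau$, and $\sigma$ is constant on each $[t_j,t_{j+1})$. For each $p\in\mathcal P$, $\bar{\mathcal G}_p$ is a graph on nodes $\{0,1,\dots,N\}$ with edge set $\bar{\mathcal E}_p$ of ordered pairs $(j,i)$, $j\ne i$; $a_{ij}(t)=1$ if $(j,i)\in\bar{\mathcal E}_{\sigma(t)}$, else $0$. $\mathcal G_{\sigma(t)}$ is the subgraph on $\{1,\dots,N\}$ with the edges of $\bar{\mathcal E}_{\sigma(t)}$ among those nodes (undirected: $(i,j)$ edge iff $(j,i)$ edge), with Laplacian $\mathcal L_{\sigma(t)}$ ($l_{ii}=\sum_{j=1}^Na_{ij}(t)$, $l_{ij}=-a_{ij}(t)$,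 $i\ne j$). $\Delta_{\sigma(t)}=\mathrm{diag}(a_{10}(t),\dots,a_{N0}(t))$, $\mathcal H_{\sigma(t)}=\mathcal L_{\sigma(t)}+\Delta_{\sigma(t)}$, and $P_{\sigma(t)}\in\mathbb{R}^{N\times N}$ is the orthogonal projection onto $\ker\mathcal H_{\sigma(t)}$ (zero matrix if the kernel is trivial). Node $i$ is reachable from $0$ if the graph has edges $(0,i_2),(i_2,i_3),\dots,(i_s,i)$; the union graph has the union of edge sets. $\prod_{r=m}^n\Xi_r=\Xi_n\cdots\Xi_{m+1}\Xi_m$. $\|\cdot\|$ is the matrix norm induced by the Euclidean norm. *)

(* Defs.v *)
From HB Require Import structures.
From mathcomp Require Import all_boot all_order all_algebra.
From mathcomp Require Import all_classical all_reals.
Set Implicit Arguments. Unset Strict Implicit. Unset Printing Implicit Defensive.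
Import Order.TTheory GRing.Theory Num.Theory.
Local Open Scope ring_scope.
Local Open Scope classical_set_scope.

(* Graphs on nodes {0,...,N} are encoded as relations E : rel 'I_N.+1,
   with  E j i  meaning  (j,i) is an edge (information flows from j to i).
   Follower node i in {1..N} (i : 'I_N, 0-based) is node  fnode i = i+1. *)
Definition fnode (N : nat) (i : 'I_N) : 'I_N.+1 := lift ord0 i.

Section Mats.
Variable R : realType.
Variable N : nat.
Variable E : rel 'I_N.+1.

Definition adj (i j : 'I_N) : R := (E (fnode j) (fnode i))%:R.
Definition adj0 (i : 'I_N) : R := (E ord0 (fnode i))%:R.

Definition lapl : 'M[R]_N :=
  \matrix_(i, j) (if i == j then \sum_(l < N) adj i l else - adj i j).
Definition Delta : 'M[R]_N := \matrix_(i, j) (if i == j then adj0 i else 0).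
Definition Hmat : 'M[R]_N := lapl + Delta.
End Mats.

Definition is_orth_proj_ker (R : realType) (N : nat) (H P : 'M[R]_N) : Prop :=
  [/\ P^T = P, P *m P = P,
      (forall x : 'cV[R]_N, H *m (P *m x) = 0) &
      (forall x : 'cV[R]_N, H *m x = 0 -> P *m x = x)].

Definition eucl_norm (R : realType) (N : nat) (x : 'cV[R]_N) : R :=
  Num.sqrt (\sum_(i < N) x i 0 ^+ 2).
Definition induced_norm (R : realType) (N : nat) (A : 'M[R]_N) : R :=
  sup [set eucl_norm (A *m x) | x in [set x : 'cV[R]_N | eucl_norm x <= 1]].

(* ordered product  \prod_{r=m}^{n-1} F r = F (n-1) * ... * F (m+1) * F m *)
Definition lprod (R : realType) (N : nat) (m n : nat) (F : nat -> 'M[R]_N)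
  : 'M[R]_N := \big[(fun A B => B *m A)/1%:M]_(m <= r < n) F r.

Definition union_graph (N n0 : nat) (E : 'I_n0 -> rel 'I_N.+1)
  (s : nat -> 'I_n0) (m n : nat) : rel 'I_N.+1 :=
  fun a b => [exists r : 'I_n, (m <= r)%N && E (s r) a b].

(* Main.v *)
Require Import Defs.
From HB Require Import structures.
From mathcomp Require Import all_boot all_order all_algebra.
From mathcomp Require Import all_classical all_reals.
From mathcomp Require Import ring lra zify.
Set Implicit Arguments. Unset Strict Implicit. Unset Printing Implicit Defensive.
Import Order.TTheory GRing.Theory Num.Theory.
Local Open Scope ring_scope.

Lemma lprodS (R : realType) (N : nat) (F : nat -> 'M[R]_N) s m :
  lprod m (m + s.+1) F = F (m + s)%N *m lprod m (m + s) F.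
Proof.
elim: s m => [|s IH] m.
  rewrite /lprod addn0 addn1 big_ltn // big_geq // big_geq //.
  by rewrite mul1mx mulmx1.
rewrite /lprod big_ltn; last lia.
rewrite -addSnnS.
have := IH m.+1; rewrite /lprod => ->.
rewrite -mulmxA; congr (_ *m _); first by rewrite addSnnS.
rewrite [in RHS]big_ltn ?addSnnS //.
lia.
Qed.

Definition ssq (R : realType) (N : nat) (v : 'cV[R]_N) : R :=
  \sum_(i < N) v i 0 ^+ 2.

Lemma ssq_ge0 (R : realType) (N : nat) (v : 'cV[R]_N) : 0 <= ssq v.
Proof. by apply: sumr_ge0 => i _; rewrite sqr_ge0. Qed.

Lemma ssqE (R : realType) (N : nat) (v : 'cV[R]_N) : ssq v = (v^T *m v) 0 0.
Proof. by rewrite mxE; apply: eq_bigr => i _; rewrite !mxE expr2. Qed.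

Lemma pyth (R : realType) (N : nat) (P : 'M[R]_N) (v : 'cV[R]_N) :
  P^T = P -> P *m P = P -> ssq v = ssq (P *m v) + ssq (v - P *m v).
Proof.
move=> PT PP; rewrite !ssqE.
set a := P *m v.
have h1 : a^T *m a = v^T *m a.
  by rewrite /a trmx_mul PT -mulmxA (mulmxA P) PP.
have h2 : a^T *m v = v^T *m a.
  by rewrite /a trmx_mul PT mulmxA.
have -> : (v - a)^T *m (v - a) = v^T *m v - v^T *m a.
  rewrite (_ : (v - a)^T = v^T - a^T); last by apply/matrixP=> i j; rewrite !mxE.
  rewrite mulmxBl !mulmxBr h1 h2.
  by rewrite subrr subr0.
rewrite h1.
have e : v^T *m v = v^T *m a + (v^T *m v - v^T *m a) by rewrite addrC subrK.
by rewrite {1}e [in LHS]mxE.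
Qed.

Lemma tele (R : realType) (N : nat) (F : nat -> 'M[R]_N) (Y : nat -> 'cV[R]_N) :
  (forall s, (F s)^T = F s /\ F s *m F s = F s) ->
  (forall s, Y s.+1 = F s *m Y s) ->
  forall n, ssq (Y 0%N) = ssq (Y n) + \sum_(s < n) ssq (Y s - Y s.+1).
Proof.
move=> hF hY; elim=> [|n IH]; first by rewrite big_ord0 addr0.
have [h1 h2] := hF n.
rewrite IH big_ord_recr /= (pyth (Y n) h1 h2) -hY.
by rewrite -!addrA [X in _ + X = _]addrC.
Qed.

Lemma cs_sum (R : realType) (a : nat -> R) s :
  (\sum_(r < s) a r) ^+ 2 <= s%:R * \sum_(r < s) a r ^+ 2.
Proof.
elim: s => [|s IH]; first by rewrite !big_ord0 expr0n /= mul0r.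
rewrite !big_ord_recr /=.
set S := \sum_(i < s) a i; set Q := \sum_(i < s) a i ^+ 2.
have Q0 : 0 <= Q by apply: sumr_ge0 => i _; rewrite sqr_ge0.
have s0 : 0 <= s%:R :> R by rewrite ler0n.
rewrite -natr1.
have key : 2 * S * a s <= Q + s%:R * a s ^+ 2.
  case: (posnP s) => [s_0|sp].
    have e0 : s%:R = 0 :> R by rewrite s_0.
    have : S ^+ 2 <= 0 by move: IH; rewrite e0 mul0r.
    have := sqr_ge0 S => h1 h2.
    have -> : S = 0 by apply/eqP; rewrite -sqrf_eq0 eq_le h2 h1.
    by rewrite mulr0 mul0r addr_ge0 // mulr_ge0 // sqr_ge0.
  have sp' : 0 < s%:R :> R by rewrite ltr0n.
  have h := sqr_ge0 (s%:R * a s - S).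
  rewrite -(ler_pM2l sp').
  have e : (s%:R * a s - S) ^+ 2 = s%:R * s%:R * a s ^+ 2 - 2 * s%:R * a s * S + S ^+ 2 by ring.
  rewrite e in h.
  have e2 : s%:R * (Q + s%:R * a s ^+ 2) = s%:R * Q + s%:R * s%:R * a s ^+ 2 by ring.
  rewrite e2.
  have e3 : s%:R * (2 * S * a s) = 2 * s%:R * a s * S by ring.
  rewrite e3.
  apply: (@le_trans _ _ (s%:R * s%:R * a s ^+ 2 + S ^+ 2)).
    by rewrite -subr_ge0 addrAC.
  by rewrite addrC lerD2r.
have -> : (S + a s) ^+ 2 = S ^+ 2 + 2 * S * a s + a s ^+ 2 by ring.
have -> : (s%:R + 1) * (Q + a s ^+ 2) = s%:R * Q + (Q + s%:R * a s ^+ 2) + a s ^+ 2 by ring.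
by rewrite lerD2r lerD.
Qed.

Lemma sum_mono_ord (R : realType) (f : nat -> R) s n :
  (forall r, 0 <= f r) -> (s <= n)%N -> \sum_(r < s) f r <= \sum_(r < n) f r.
Proof.
move=> f0; elim: n => [|n IH].
  by rewrite leqn0 => /eqP ->.
rewrite leq_eqVlt => /orP [/eqP -> //|].
rewrite ltnS => /IH h; rewrite big_ord_recr /=.
by apply: (le_trans h); rewrite lerDl.
Qed.

Lemma diffsum (R : realType) (N : nat) (Y : nat -> 'cV[R]_N) s :
  Y 0%N - Y s = \sum_(r < s) (Y r - Y r.+1).
Proof.
elim: s => [|s IH]; first by rewrite big_ord0 subrr.
by rewrite big_ord_recr /= -IH addrA subrK.
Qed.

Lemma entry_le_ssq (R : realType) (N : nat) (v : 'cV[R]_N) i :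
  v i 0 ^+ 2 <= ssq v.
Proof.
rewrite /ssq (bigD1 i) //= lerDl.
by apply: sumr_ge0 => j _; rewrite sqr_ge0.
Qed.

Lemma comp_bound (R : realType) (N : nat) (Y : nat -> 'cV[R]_N) n s i :
  (s <= n)%N ->
  (Y 0%N i 0 - Y s i 0) ^+ 2 <= n%:R * \sum_(r < n) ssq (Y r - Y r.+1).
Proof.
move=> sn.
have -> : Y 0%N i 0 - Y s i 0 = \sum_(r < s) (Y r - Y r.+1) i 0.
  by rewrite -summxE -diffsum !mxE.
apply: (le_trans (cs_sum (fun r => (Y r - Y r.+1) i 0) s)).
apply: (@le_trans _ _ (s%:R * \sum_(r < s) ssq (Y r - Y r.+1))).
  apply: (ler_wpM2l (ler0n _ s)).
  by apply: ler_sum => r _; apply: entry_le_ssq.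
have hs0 : 0 <= \sum_(r < s) ssq (Y r - Y r.+1).
  by apply: sumr_ge0 => r _; apply: ssq_ge0.
apply: (@le_trans _ _ (n%:R * \sum_(r < s) ssq (Y r - Y r.+1))).
  by apply: (ler_wpM2r hs0); rewrite ler_nat.
apply: (ler_wpM2l (ler0n _ n)).
apply: (@sum_mono_ord R (fun r => ssq (Y r - Y r.+1)) s n) => // r; apply: ssq_ge0.
Qed.

Lemma le_sum_term (R : realType) (N : nat) (f : 'I_N -> R) i :
  (forall j, 0 <= f j) -> f i <= \sum_j f j.
Proof.
move=> f0; rewrite (bigD1 i) //= lerDl.
by apply: sumr_ge0 => j _.
Qed.

Lemma Hy_entry (R : realType) (N : nat) (E : rel 'I_N.+1) (y : 'cV[R]_N) i :
  (forall a, ~~ E a a) ->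
  (Hmat R E *m y) i 0 =
  \sum_j adj R E i j * (y i 0 - y j 0) + adj0 R E i * y i 0.
Proof.
move=> noloop.
have aii : forall k, adj R E k k = 0.
  by move=> k; rewrite /adj (negbTE (noloop _)).
rewrite mxE.
under eq_bigr => j _ do rewrite /Hmat !mxE mulrDl.
rewrite big_split /=; congr (_ + _).
  have -> : \sum_j (if i == j then \sum_(l < N) adj R E i l else - adj R E i j) * y j 0
     = \sum_j (((i == j)%:R * \sum_(l < N) adj R E i l) * y j 0 - adj R E i j * y j 0).
    apply: eq_bigr => j _; case: eqVneq => [<-|_].
      by rewrite aii mul1r mul0r subr0.
    by rewrite mul0r mul0r sub0r mulNr.
  set S := \sum_(l < N) adj R E i l.
  rewrite sumrB.
  have -> : \sum_j (i == j)%:R * S * y j 0 = S * y i 0.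
    rewrite (bigD1 i) //= eqxx mul1r big1 ?addr0 // => j.
    by rewrite eq_sym => /negbTE ->; rewrite !mul0r.
  rewrite /S big_distrl /= -sumrB.
  by apply: eq_bigr => j _; rewrite mulrBr.
rewrite (bigD1 i) //= big1; last first.
  by move=> j; rewrite eq_sym => /negbTE ->; rewrite mul0r.
by rewrite eqxx addr0.
Qed.

Lemma adj_ge0 (R : realType) (N : nat) (E : rel 'I_N.+1) i j : 0 <= adj R E i j.
Proof. by rewrite /adj ler0n. Qed.

Lemma adj0_ge0 (R : realType) (N : nat) (E : rel 'I_N.+1) i : 0 <= adj0 R E i.
Proof. by rewrite /adj0 ler0n. Qed.

Lemma Hker (R : realType) (N : nat) (E : rel 'I_N.+1) (y : 'cV[R]_N) :
  (forall a, ~~ E a a) ->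
  (forall i l : 'I_N, E (fnode l) (fnode i) = E (fnode i) (fnode l)) ->
  Hmat R E *m y = 0 ->
  (forall i l, E (fnode l) (fnode i) -> y i 0 = y l 0) /\
  (forall i, E ord0 (fnode i) -> y i 0 = 0).
Proof.
move=> noloop sym hy.
have asym : forall i j, adj R E i j = adj R E j i by move=> i j; rewrite /adj sym.
have hz : forall i, \sum_j adj R E i j * (y i 0 - y j 0) + adj0 R E i * y i 0 = 0.
  by move=> i; rewrite -Hy_entry // hy mxE.
set A := \sum_i \sum_j adj R E i j * (y i 0 * (y i 0 - y j 0)).
set B := \sum_i adj0 R E i * y i 0 ^+ 2.
have AB : A + B = 0.
  rewrite /A /B -big_split /=.
  apply: big1 => i _.
  transitivity (y i 0 * (\sum_j adj R E i j * (y i 0 - y j 0) + adj0 R E i * y i 0));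
    last by rewrite hz mulr0.
  rewrite mulrDr big_distrr /=.
  congr (_ + _); last by rewrite expr2; ring.
  by apply: eq_bigr => j _; ring.
have A2 : A = \sum_i \sum_j adj R E i j * (y j 0 * (y j 0 - y i 0)).
  rewrite /A exchange_big /=.
  by apply: eq_bigr => i _; apply: eq_bigr => j _; rewrite asym.
set C := \sum_i \sum_j adj R E i j * (y i 0 - y j 0) ^+ 2.
have CA : C = A + A.
  rewrite {2}A2 /A /C -big_split /=; apply: eq_bigr => i _.
  rewrite -big_split /=; apply: eq_bigr => j _; ring.
have C0 : 0 <= C.
  by apply: sumr_ge0 => i _; apply: sumr_ge0 => j _; rewrite mulr_ge0 ?adj_ge0 ?sqr_ge0.
have B0 : 0 <= B.
  by apply: sumr_ge0 => i _; rewrite mulr_ge0 ?adj0_ge0 ?sqr_ge0.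
have CB : C + B + B = 0 by rewrite CA; lra.
have Ceq : C = 0 by lra.
have Beq : B = 0 by lra.
split.
  move=> i l hil.
  have : adj R E i l * (y i 0 - y l 0) ^+ 2 <= 0.
    rewrite -Ceq /C.
    apply: (@le_trans _ _ (\sum_j adj R E i j * (y i 0 - y j 0) ^+ 2)); last first.
      apply: (@le_sum_term R N (fun i => \sum_j adj R E i j * (y i 0 - y j 0) ^+ 2) i).
      by move=> k; apply: sumr_ge0 => j _; rewrite mulr_ge0 ?adj_ge0 ?sqr_ge0.
    apply: (@le_sum_term R N (fun j => adj R E i j * (y i 0 - y j 0) ^+ 2) l).
    by move=> j; rewrite mulr_ge0 ?adj_ge0 ?sqr_ge0.
  rewrite /adj hil mul1r => h.
  have : (y i 0 - y l 0) ^+ 2 == 0 by rewrite eq_le h sqr_ge0.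
  by rewrite sqrf_eq0 subr_eq0 => /eqP.
move=> i hi.
have : adj0 R E i * y i 0 ^+ 2 <= 0.
  rewrite -Beq /B.
  apply: (@le_sum_term R N (fun i => adj0 R E i * y i 0 ^+ 2) i).
  by move=> j; rewrite mulr_ge0 ?adj0_ge0 ?sqr_ge0.
rewrite /adj0 hi mul1r => h.
have : y i 0 ^+ 2 == 0 by rewrite eq_le h sqr_ge0.
by rewrite sqrf_eq0 => /eqP.
Qed.

Lemma step_ineq (R : realType) (K c u v : R) :
  0 <= K -> 0 <= c -> u ^+ 2 <= c ^+ 2 * K -> (u - v) ^+ 2 <= K ->
  v ^+ 2 <= (c + 1) ^+ 2 * K.
Proof.
move=> K0 c0 hu hw.
set w := u - v in hw.
have hv : v = u - w by rewrite /w opprB addrC subrK.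
have huw : `|u| * `|w| <= c * K.
  rewrite -(ler_pXn2r (_ : (0 < 2)%N)) ?nnegrE ?mulr_ge0 //.
  rewrite exprMn !real_normK ?num_real //.
  have -> : (c * K) ^+ 2 = (c ^+ 2 * K) * K by ring.
  apply: ler_pM => //; exact: sqr_ge0.
have h2 : - (u * w) <= `|u| * `|w|.
  by rewrite -normrM -normrN ler_norm.
rewrite hv.
have -> : (u - w) ^+ 2 = u ^+ 2 + 2 * (- (u * w)) + w ^+ 2 by ring.
have -> : (c + 1) ^+ 2 * K = c ^+ 2 * K + 2 * (c * K) + K by ring.
lra.
Qed.

Definition zext (R : realType) (N : nat) (v : 'cV[R]_N) (a : 'I_N.+1) : R :=
  match unlift ord0 a with Some i => v i 0 | None => 0 end.

Lemma zext0 (R : realType) (N : nat) (v : 'cV[R]_N) : zext v ord0 = 0.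
Proof. by rewrite /zext unlift_none. Qed.

Lemma zextf (R : realType) (N : nat) (v : 'cV[R]_N) i : zext v (fnode i) = v i 0.
Proof. by rewrite /zext /fnode liftK. Qed.

Lemma path_bound (R : realType) (N : nat) (e : rel 'I_N.+1) (x : 'cV[R]_N) (K : R) :
  0 <= K ->
  (forall a (i : 'I_N), e a (fnode i) -> (zext x a - x i 0) ^+ 2 <= K) ->
  forall p a (c : nat), path e a p -> zext x a ^+ 2 <= c%:R ^+ 2 * K ->
  zext x (last a p) ^+ 2 <= (c + size p)%:R ^+ 2 * K.
Proof.
move=> K0 he; elim=> [|b p IH] a c /=; first by rewrite addn0.
move=> /andP [eab pp] ha.
have hb : zext x b ^+ 2 <= (c.+1)%:R ^+ 2 * K.
  move: eab; case: (unliftP ord0 b) => [j ->|->] eab.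
    rewrite zextf -natr1; apply: (step_ineq K0 _ ha) => //.
    by move: (he a j eab).
  by rewrite /zext unlift_none expr0n /= mulr_ge0 ?sqr_ge0.
by have := IH b c.+1 pp hb; rewrite addSnnS.
Qed.

Lemma reach_bound (R : realType) (N : nat) (e : rel 'I_N.+1) (x : 'cV[R]_N) (K : R) :
  0 <= K ->
  (forall a (i : 'I_N), e a (fnode i) -> (zext x a - x i 0) ^+ 2 <= K) ->
  forall i, connect e ord0 (fnode i) -> x i 0 ^+ 2 <= N%:R ^+ 2 * K.
Proof.
move=> K0 he i /connectP [p pth lst].
rewrite -zextf lst.
case: (shortenP pth) => p' pth' uq _.
have sz : (size p' <= N)%N.
  have := max_card (mem (ord0 :: p')).
  by rewrite card_ord (card_uniqP uq) /=.
have := path_bound K0 he pth' (c := 0%N).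
rewrite add0n zext0 expr0n /= mul0r => /(_ (lexx _)) h.
apply: (le_trans h); apply: ler_wpM2r => //.
by rewrite ler_pXn2r ?nnegrE ?ler0n // ler_nat.
Qed.

Lemma core (R : realType) (N n0 : nat) (E : 'I_n0 -> rel 'I_N.+1)
  (P : 'I_n0 -> 'M[R]_N) (g : nat -> 'I_n0) (m n M : nat) (x : 'cV[R]_N) :
  (forall p a, ~~ E p a a) ->
  (forall p, is_orth_proj_ker (Hmat R (E p)) (P p)) ->
  (forall r (i l : 'I_N), E (g r) (fnode l) (fnode i) = E (g r) (fnode i) (fnode l)) ->
  (n <= M)%N ->
  (forall i, connect (union_graph E g m (m + n)) ord0 (fnode i)) ->
  ssq x <= (4 * (N%:R ^+ 3 * M%:R) + 1) *
     (ssq x - ssq (lprod m (m + n) (fun r => P (g r)) *m x)).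
Proof.
move=> noloop hP sym nM conn.
set F := fun r => P (g r).
pose Y s := lprod m (m + s) F *m x.
have Y0 : Y 0%N = x by rewrite /Y addn0 /lprod big_geq // mul1mx.
have YS : forall s, Y s.+1 = F (m + s)%N *m Y s.
  by move=> s; rewrite /Y lprodS mulmxA.
have hF : forall s, (F (m + s)%N)^T = F (m + s)%N /\ F (m + s)%N *m F (m + s)%N = F (m + s)%N.
  by move=> s; case: (hP (g (m + s)%N)).
have tl := tele hF YS n.
rewrite Y0 in tl.
set D := \sum_(s < n) ssq (Y s - Y s.+1) in tl.
have D0 : 0 <= D by apply: sumr_ge0 => s _; apply: ssq_ge0.
have -> : ssq x - ssq (lprod m (m + n) F *m x) = D.
  by rewrite -/(Y n) tl addrC addKr.
have cb : forall s i, (s <= n)%N -> (x i 0 - Y s i 0) ^+ 2 <= n%:R * D.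
  by move=> s i sn; rewrite -{1}Y0; apply: comp_bound.
set K := 4 * (n%:R * D).
have K0 : 0 <= K by rewrite mulr_ge0 // mulr_ge0 // ler0n.
have he : forall a (i : 'I_N), union_graph E g m (m + n) a (fnode i) ->
    (zext x a - x i 0) ^+ 2 <= K.
  move=> a i /existsP [r /andP [mr er]].
  have rlt := ltn_ord r.
  set s := (r - m)%N.
  have ers : r = (m + s)%N :> nat by rewrite /s subnKC.
  have sn : (s.+1 <= n)%N by rewrite /s; lia.
  set y := Y s.+1.
  have hy : Hmat R (E (g r)) *m y = 0.
    by rewrite /y YS /F -ers; case: (hP (g r)) => _ _ h _; apply: h.
  have [h1 h2] := Hker (noloop (g r)) (sym r) hy.
  have ci := cb _ i sn.
  have nD0 : 0 <= n%:R * D by rewrite mulr_ge0 // ler0n.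
  move: er; case: (unliftP ord0 a) => [l ->|->] er.
    rewrite zextf.
    have cl := cb _ l sn.
    have yil := h1 _ _ er.
    have -> : x l 0 - x i 0 = (x l 0 - y l 0) - (x i 0 - y i 0) by rewrite yil; ring.
    have sq : forall p q : R, (p - q) ^+ 2 <= 2 * p ^+ 2 + 2 * q ^+ 2.
      move=> p q; have := sqr_ge0 (p + q).
      have -> : 2 * p ^+ 2 + 2 * q ^+ 2 = (p - q) ^+ 2 + (p + q) ^+ 2 by ring.
      by rewrite lerDl.
    apply: (le_trans (sq _ _)); rewrite /K; lra.
  rewrite zext0.
  have -> : (0 - x i 0) ^+ 2 = (x i 0 - y i 0) ^+ 2 by rewrite (h2 _ er); ring.
  rewrite /K; lra.
have xb : forall i, x i 0 ^+ 2 <= N%:R ^+ 2 * K.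
  by move=> i; apply: (reach_bound K0 he (conn i)).
have : ssq x <= N%:R * (N%:R ^+ 2 * K).
  rewrite /ssq.
  apply: (@le_trans _ _ (\sum_(i < N) N%:R ^+ 2 * K)); first by apply: ler_sum => i _.
  by rewrite sumr_const card_ord mulr_natl.
move=> h; apply: (le_trans h).
rewrite /K.
have -> : N%:R * (N%:R ^+ 2 * (4 * (n%:R * D))) = 4 * (N%:R ^+ 3 * n%:R) * D by ring.
apply: ler_wpM2r => //.
apply: (@le_trans _ _ (4 * (N%:R ^+ 3 * M%:R))); last by rewrite lerDl.
apply: ler_wpM2l => //.
apply: ler_wpM2l; first by rewrite exprn_ge0 // ler0n.
by rewrite ler_nat.
Qed.

Set Strict Implicit. Unset Implicit Arguments.

Theorem lemma1 (R : realType) (N n0 : nat)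
  (E : 'I_n0 -> rel 'I_N.+1)
  (P : 'I_n0 -> 'M[R]_N)
  (t : nat -> R) (tau : R) (sigma : R -> 'I_n0)
  (Tc : R) (jk : nat -> nat) :
  (forall p a, ~~ E p a a) ->
  (forall p, is_orth_proj_ker (Hmat R (E p)) (P p)) ->
  t 0%N = 0 -> 0 < tau -> (forall j, tau <= t j.+1 - t j) ->
  (forall j s, t j <= s -> s < t j.+1 -> sigma s = sigma (t j)) ->
  (forall s, 0 <= s -> forall i l : 'I_N,
      E (sigma s) (fnode l) (fnode i) = E (sigma s) (fnode i) (fnode l)) ->
  0 < Tc -> jk 0%N = 0%N -> (forall k, (jk k < jk k.+1)%N) ->
  (forall k, t (jk k.+1) - t (jk k) <= Tc) ->
  (forall k (i : 'I_N),
      connect (union_graph E (fun r => sigma (t r)) (jk k) (jk k.+1))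
              ord0 (fnode i)) ->
  exists delta : R, 0 < delta < 1 /\
    forall k, induced_norm (lprod (jk k) (jk k.+1) (fun r => P (sigma (t r))))
              <= delta.
Proof.
move=> noloop hP t0 tau0 dwell _ sym Tc0 _ jkinc jkTc conn.
have tmono : forall a d, t a + d%:R * tau <= t (a + d)%N.
  move=> a; elim=> [|d IH]; first by rewrite mul0r addr0 addn0.
  rewrite addnS -natr1 mulrDl mul1r addrA.
  have := dwell (a + d)%N; lra.
have tpos : forall r, 0 <= t r.
  move=> r; have := tmono 0%N r; rewrite t0 add0r add0n => h.
  by apply: le_trans h; rewrite mulr_ge0 ?ler0n // ltW.
set M := (Num.trunc (Tc / tau)).+1.
have nM : forall k, (jk k.+1 - jk k <= M)%N.
  move=> k; set n := (jk k.+1 - jk k)%N.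
  have e : jk k.+1 = (jk k + n)%N by rewrite /n subnKC // ltnW.
  have h1 := tmono (jk k) n; rewrite -e in h1.
  have h2 : n%:R * tau <= Tc by have := jkTc k; lra.
  have h3 : n%:R <= Tc / tau by rewrite ler_pdivlMr.
  have h4 := truncnS_gt (Tc / tau).
  have : n%:R < M%:R :> R by apply: le_lt_trans h3 h4.
  by rewrite ltr_nat => /ltnW.
set c : R := 4 * (N%:R ^+ 3 * M%:R) + 1.
have c1 : 1 <= c by rewrite lerDr mulr_ge0 // mulr_ge0 ?exprn_ge0 ?ler0n.
have c0 : 0 < c by lra.
set u := c^-1.
have cu : c * u = 1 by rewrite /u mulfV // gt_eqF.
have u0 : 0 < u by rewrite /u invr_gt0.
have u1 : u <= 1 by rewrite /u invr_le1 // ?unitfE ?gt_eqF.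
exists (1 - u / 2); split; first by apply/andP; split; lra.
move=> k.
set n := (jk k.+1 - jk k)%N.
have e : jk k.+1 = (jk k + n)%N by rewrite /n subnKC // ltnW.
set A := lprod (jk k) (jk k.+1) (fun r => P (sigma (t r))).
apply: ge_sup.
  exists (eucl_norm (A *m 0)); exists 0 => //.
  rewrite /= /eucl_norm big1 ?sqrtr0 ?ler01 // => i _; by rewrite mxE expr0n.
move=> _ [x hx <-].
have sx : ssq x <= 1 by move: hx; rewrite /= /eucl_norm -{1}sqrtr1 ler_sqrt.
have sx0 := ssq_ge0 x.
have conn' : forall i, connect (union_graph E (fun r => sigma (t r)) (jk k) (jk k + n)) ord0 (fnode i).
  by move=> i; rewrite -e; apply: conn.
have hc := core (g := fun r => sigma (t r)) (m := jk k) x noloop hP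
  (fun r => sym (t r) (tpos r)) (nM k) conn'.
rewrite -e -/A -/c in hc.
set q := ssq (A *m x) in hc.
have q0 : 0 <= q by apply: ssq_ge0.
have hq : q <= (1 - u / 2) ^+ 2.
  have h1 : ssq x * u <= ssq x - q.
    have := ler_wpM2r (ltW u0) hc.
    by rewrite mulrAC cu mul1r.
  have h2 : 0 <= (1 - ssq x) * u by rewrite mulr_ge0 // ?subr_ge0 // ltW.
  have -> : (1 - u / 2) ^+ 2 = 1 - u + u * u / 4 by field.
  have : 0 <= u * u / 4 by apply: divr_ge0 => //; apply: mulr_ge0; apply: ltW.
  nra.
rewrite /eucl_norm -/(ssq (A *m x)) -/q.
rewrite -(@ger0_norm _ (1 - u / 2)); last by lra.
by rewrite -sqrtr_sqr ler_sqrt // sqr_ge0.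
Qed.
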